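(* Let $H$ be a $\{P,C\}$-free 3-graph on vertex set $V$, let $e_1,e_2\in H$ with $e_1\cap e_2=\{x\}$, set $U=e_1\cup e_2$, $W=V\setminus U$, and assume $H[W]$ has at least one edge. Let $W_0$ be the set of vertices of degree $0$ in $H[W]$, $W_1=W\setminus W_0$ (so $|W_1|\ge 3$), and let $H_1$ be the set of edges $h\in H$ with $h\cap U\ne\emptyset$, $h\cap W\neq\emptyset$ and $h\cap W\subseteq W_1$. Then $|H_1|\le 2|W_1|-3$, and if moreover $|W_1|\ge 4$ then $|H[U]|+|H_1|\le 2|W_1|+2$.
   Context: All hypergraphs are 3-uniform; edge sets are identified with the 3-graphs; $H[S]$ is the sub-3-graph induced on $S$. $P$ is the loose 3-uniform path of length 3: vertices $a,b,c,d,e,f,g$, edges $\{a,b,c\},\{c,d,e\},\{e,f,g\}$. $C$ is the loose triangle: vertices $x_1,x_2,x_3,y_1,y_2,y_3$, edges $\{x_1,y_3,x_2\},\{x_2,y_1,x_3\},\{x_3,y_2,x_1\}$. $\{P,C\}$-free means containing no copy of $P$ and no copy of $C$. *)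

(* Defs.v *)
From mathcomp Require Import all_boot.
Set Implicit Arguments. Unset Strict Implicit. Unset Printing Implicit Defensive.

Definition uniform3 (T : finType) (H : {set {set T}}) : Prop :=
  forall h, h \in H -> #|h| = 3.

Definition has_P (T : finType) (H : {set {set T}}) : Prop :=
  exists a b c d e f g : T,
    uniq [:: a; b; c; d; e; f; g] /\
    [set a; b; c] \in H /\ [set c; d; e] \in H /\ [set e; f; g] \in H.

Definition has_C (T : finType) (H : {set {set T}}) : Prop :=
  exists x1 x2 x3 y1 y2 y3 : T,
    uniq [:: x1; x2; x3; y1; y2; y3] /\
    [set x1; y3; x2] \in H /\ [set x2; y1; x3] \in H /\ [set x3; y2; x1] \in H.

Definition PC_free (T : finType) (H : {set {set T}}) : Prop :=
  ~ has_P H /\ ~ has_C H.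

Definition induced (T : finType) (H : {set {set T}}) (S : {set T}) : {set {set T}} :=
  [set h in H | h \subset S].

Definition deg (T : finType) (H : {set {set T}}) (v : T) : nat :=
  #|[set h in H | v \in h]|.

(* Main.v *)
Require Import Defs.
From mathcomp Require Import all_boot.
From mathcomp Require Import zify.
Set Implicit Arguments. Unset Strict Implicit. Unset Printing Implicit Defensive.

Lemma card3_first (T : finType) (A : {set T}) c :
  #|A| = 3 -> c \in A ->
  exists a b, [&& c != a, c != b & a != b] /\ A = [set c; a; b].
Proof.
move=> HA cA.
have : #|A :\ c| == 2 by move: HA; rewrite (cardsD1 c) cA add1n => -[->].
case/cards2P=> a [b [ab E]].
have aD : a \in A :\ c by rewrite E !inE eqxx.
have bD : b \in A :\ c by rewrite E !inE eqxx orbT.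
move: aD bD; rewrite !inE => /andP[ac _] /andP[bc _].
exists a, b; split.
  by rewrite (eq_sym c a) (eq_sym c b) ac bc ab.
by rewrite -{1}(setD1K cA) E; apply/setP=> z; rewrite !inE orbA.
Qed.

Lemma inter1 (T : finType) (A B : {set T}) c z :
  A :&: B = [set c] -> z \in A -> z \in B -> z = c.
Proof. by move=> E zA zB; apply/set1P; rewrite -E inE zA zB. Qed.

Lemma inter1_mem (T : finType) (A B : {set T}) c :
  A :&: B = [set c] -> c \in A /\ c \in B.
Proof. move=> E; have : c \in A :&: B by rewrite E inE.
by rewrite inE => /andP. Qed.

Lemma card3_two (T : finType) (A : {set T}) c e :
  #|A| = 3 -> c \in A -> e \in A -> c != e ->
  exists d, [&& c != d & d != e] /\ A = [set c; d; e].
Proof.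
move=> HA cA eA ce.
have [a [b [/and3P[ca cb ab] E]]] := card3_first HA cA.
move: eA; rewrite E !inE => /orP[/orP[/eqP ee|/eqP ee]|/eqP ee].
- by rewrite ee eqxx in ce.
- subst e; exists b; rewrite cb eq_sym ab; split=> //.
  by apply/setP=> z; rewrite !inE; case: (z == c); case: (z == a); case: (z == b).
- by subst e; exists a; rewrite ca ab; split.
Qed.

Ltac contra_mem :=
  match goal with
  | H1 : is_true (?z \in ?S), H2 : is_true (?z \notin ?S) |- _ => by rewrite H1 in H2
  | H1 : is_true (?z != ?z) |- _ => by rewrite eqxx in H1
  end.

Ltac neq_tac :=
  apply/negP => /eqP E;
  first [ subst | idtac ]; contra_mem.

Lemma notin_of (T : finType) (A B : {set T}) c z :
  A :&: B = [set c] -> z \in A -> c != z -> z \notin B.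
Proof. by move=> E zA cz; apply/negP=> zB; rewrite (inter1 E zA zB) eqxx in cz. Qed.

Lemma notin_disj (T : finType) (A B : {set T}) z :
  [disjoint A & B] -> z \in A -> z \notin B.
Proof. by move=> D zA; rewrite (disjointFr D zA). Qed.

Lemma notin_disj' (T : finType) (A B : {set T}) z :
  [disjoint A & B] -> z \in B -> z \notin A.
Proof. by move=> D zB; rewrite (disjointFl D zB). Qed.

Lemma P_lem (T : finType) (H : {set {set T}}) g1 g2 g3 c e :
  uniform3 H -> ~ has_P H -> g1 \in H -> g2 \in H -> g3 \in H ->
  g1 :&: g2 = [set c] -> g2 :&: g3 = [set e] -> [disjoint g1 & g3] -> False.
Proof.
move=> U3 nP G1 G2 G3 E12 E23 D13.
have [c1 c2] := inter1_mem E12.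
have [e2 e3] := inter1_mem E23.
have ce : c != e by apply/negP=> /eqP ce; subst; move: (notin_disj D13 c1); rewrite e3.
have [a [b [/and3P[ca cb ab] Eg1]]] := card3_first (U3 _ G1) c1.
have [d [/andP[cd de] Eg2]] := card3_two (U3 _ G2) c2 e2 ce.
have [f [g [/and3P[ef eg fg] Eg3]]] := card3_first (U3 _ G3) e3.
have a1 : a \in g1 by rewrite Eg1 !inE eqxx orbT.
have b1 : b \in g1 by rewrite Eg1 !inE eqxx !orbT.
have d2 : d \in g2 by rewrite Eg2 !inE eqxx orbT.
have f3 : f \in g3 by rewrite Eg3 !inE eqxx orbT.
have g3' : g \in g3 by rewrite Eg3 !inE eqxx !orbT.
have na2 := notin_of E12 a1 ca.
have nb2 := notin_of E12 b1 cb.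
have na3 := notin_disj D13 a1.
have nb3 := notin_disj D13 b1.
have nc3 := notin_disj D13 c1.
have ne1 := notin_disj' D13 e3.
have nf1 := notin_disj' D13 f3.
have ng1 := notin_disj' D13 g3'.
have nd3 : d \notin g3 by apply: (notin_of E23 d2); rewrite eq_sym.
have nd1 : d \notin g1 by apply: (notin_of (A:=g2)); [rewrite setIC; exact: E12 | exact: d2 | done].
have nf2 : f \notin g2 by apply: (notin_of (A:=g3)); [rewrite setIC; exact: E23 | exact: f3 | done].
have ng2 : g \notin g2 by apply: (notin_of (A:=g3)); [rewrite setIC; exact: E23 | exact: g3' | done].
apply: nP; exists a, b, c, d, e, f, g; split.
  rewrite /= !inE !negb_or.
  repeat (apply/andP; split); try done; try neq_tac.
split; first by rewrite (_ : [set a; b; c] = g1) // Eg1; apply/setP=> z; rewrite !inE;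
  case: (z == c); case: (z == a); case: (z == b).
by rewrite -Eg2 -Eg3.
Qed.

Lemma disj_of (T : finType) (A B : {set T}) :
  (forall z, z \in A -> z \in B -> False) -> [disjoint A & B].
Proof.
move=> D; rewrite -setI_eq0; apply/eqP/setP=> z; rewrite !inE.
by apply/negP=> /andP[zA zB]; exact: (D z zA zB).
Qed.

Lemma inter1_of (T : finType) (A B : {set T}) c :
  c \in A -> c \in B -> (forall z, z \in A -> z \in B -> z = c) -> A :&: B = [set c].
Proof.
move=> cA cB I; apply/setP=> z; rewrite !inE.
apply/andP/eqP=> [[zA zB]|->]; [exact: I | by split].
Qed.

Lemma inW (T : finType) (e1 e2 : {set T}) z :
  (z \in ~: (e1 :|: e2)) = (z \notin e1) && (z \notin e2).
Proof. by rewrite !inE negb_or. Qed.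

Lemma xin (T : finType) (e1 e2 : {set T}) x : e1 :&: e2 = [set x] -> x \in e1 /\ x \in e2.
Proof. exact: inter1_mem. Qed.

Lemma p_is_x (T : finType) (H : {set {set T}}) e1 e2 x w p q :
  uniform3 H -> ~ has_P H -> e1 \in H -> e2 \in H -> e1 :&: e2 = [set x] ->
  [set w; p; q] \in H -> w \in ~: (e1 :|: e2) -> q \in ~: (e1 :|: e2) -> p \in e1 -> p = x.
Proof.
move=> U3 nP E1 E2 Ex Hh; rewrite !inW => /andP[w1 w2] /andP[q1 q2] p1.
apply/eqP; apply/negPn/negP=> px.
apply: (P_lem U3 nP E2 E1 Hh (c := x) (e := p)).
- by rewrite setIC.
- apply: inter1_of => //; first by rewrite !inE eqxx orbT.
  move=> z z1; rewrite !inE => /orP[/orP[/eqP zw|/eqP zp]|/eqP zq] //.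
  + by subst; rewrite z1 in w1.
  + by subst; rewrite z1 in q1.
- apply: disj_of=> z z2; rewrite !inE => /orP[/orP[/eqP zw|/eqP zp]|/eqP zq].
  + by subst; rewrite z2 in w2.
  + by subst; move: (inter1 Ex p1 z2) => /eqP; rewrite (negbTE px).
  + by subst; rewrite z2 in q2.
Qed.

Lemma twin (T : finType) (H : {set {set T}}) e1 e2 x w y f :
  uniform3 H -> ~ has_P H -> e1 \in H -> e2 \in H -> e1 :&: e2 = [set x] ->
  [set x; w; y] \in H -> w \in ~: (e1 :|: e2) -> y \in ~: (e1 :|: e2) ->
  f \in H -> f \subset ~: (e1 :|: e2) -> w \in f -> y \in f.
Proof.
move=> U3 nP E1 E2 Ex Hh wW yW F fW wf.
have [x1 x2] := xin Ex.
apply/negPn/negP=> yf.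
move: (wW) (yW); rewrite !inW => /andP[w1 w2] /andP[y1 y2].
apply: (P_lem U3 nP E1 Hh F (c := x) (e := w)).
- apply: inter1_of => //; first by rewrite !inE eqxx.
  move=> z z1; rewrite !inE => /orP[/orP[/eqP zx|/eqP zw]|/eqP zy] //.
  + by subst; rewrite z1 in w1.
  + by subst; rewrite z1 in y1.
- apply: inter1_of => //; first by rewrite !inE eqxx orbT.
  move=> z; rewrite !inE => /orP[/orP[/eqP zx|/eqP zw]|/eqP zy] zf //.
  + by subst; move/subsetP: fW => /(_ _ zf); rewrite inW x1.
  + by subst; rewrite zf in yf.
- apply: disj_of=> z z1 zf; move/subsetP: fW => /(_ _ zf); rewrite inW z1.
  done.
Qed.

Lemma Bexcl (T : finType) (H : {set {set T}}) e1 e2 x w y :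
  uniform3 H -> ~ has_P H -> e1 \in H -> e2 \in H -> e1 :&: e2 = [set x] ->
  [set x; w; y] \in H -> w \in ~: (e1 :|: e2) -> y \in ~: (e1 :|: e2) ->
  (e1 :\ x) :|: [set w] \in H -> False.
Proof.
move=> U3 nP E1 E2 Ex Hh wW yW HB.
have [x1 x2] := xin Ex.
move: (wW) (yW); rewrite !inW => /andP[w1 w2] /andP[y1 y2].
apply: (P_lem U3 nP E2 Hh HB (c := x) (e := w)).
- apply: inter1_of => //; first by rewrite !inE eqxx.
  move=> z z2; rewrite !inE => /orP[/orP[/eqP zx|/eqP zw]|/eqP zy] //.
  + by subst; rewrite z2 in w2.
  + by subst; rewrite z2 in y2.
- apply: inter1_of => //; first by rewrite !inE eqxx orbT.
    by rewrite !inE eqxx orbT.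
  move=> z; rewrite !inE => /orP[/orP[/eqP zx|/eqP zw]|/eqP zy] //.
  + by subst; rewrite eqxx /= => /eqP zw; subst; rewrite x1 in w1.
  + by subst; rewrite (negbTE y1) andbF /= => /eqP.
- apply: disj_of=> z z2; rewrite !inE => /orP[/andP[zx z1]|/eqP zw].
  + by move: (inter1 Ex z1 z2) => /eqP; rewrite (negbTE zx).
  + by subst; rewrite z2 in w2.
Qed.

Lemma F1 (T : finType) (H : {set {set T}}) e1 e2 x f v v' :
  uniform3 H -> ~ has_P H -> e1 \in H -> e2 \in H -> e1 :&: e2 = [set x] ->
  f \in H -> f \subset ~: (e1 :|: e2) -> v \in f -> v' \in f -> v != v' ->
  (e1 :\ x) :|: [set v] \in H -> (e2 :\ x) :|: [set v'] \in H -> False.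
Proof.
move=> U3 nP E1 E2 Ex F fW vf v'f vv' B1 B2.
have fW' z : z \in f -> (z \notin e1) && (z \notin e2) by move=> zf; rewrite -inW; move/subsetP: fW; apply.
apply: (P_lem U3 nP B1 F B2 (c := v) (e := v')).
- apply: inter1_of => //; first by rewrite !inE eqxx orbT.
  move=> z; rewrite !inE => /orP[/andP[zx z1]|/eqP zv] zf //.
  by move: (fW' z zf); rewrite z1.
- apply: inter1_of => //; first by rewrite !inE eqxx orbT.
  move=> z zf; rewrite !inE => /orP[/andP[zx z2]|/eqP zv] //.
  by move: (fW' z zf); rewrite z2 andbF.
- apply: disj_of=> z; rewrite !inE => /orP[/andP[zx z1]|/eqP zv] /orP[/andP[zx' z2]|/eqP zv'].
  + by move: (inter1 Ex z1 z2) => /eqP; rewrite (negbTE zx).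
  + by subst; move: (fW' _ v'f); rewrite z1.
  + by subst; move: (fW' _ vf); rewrite z2 andbF.
  + by move: vv'; rewrite -zv -zv' eqxx.
Qed.

Lemma qsame (T : finType) (H : {set {set T}}) e1 e2 e w p q f :
  uniform3 H -> ~ has_P H -> e \in H -> e \subset e1 :|: e2 ->
  p \in e -> q \notin e -> [set w; p; q] \in H -> w \in ~: (e1 :|: e2) ->
  p \in e1 :|: e2 -> q \in e1 :|: e2 ->
  f \in H -> f \subset ~: (e1 :|: e2) -> w \in f -> False.
Proof.
move=> U3 nP E eU pe qe Hh wW pU qU F fW wf.
have fW' z : z \in f -> z \notin e1 :|: e2 by move=> zf; move/subsetP: fW => /(_ _ zf); rewrite inE.
apply: (P_lem U3 nP E Hh F (c := p) (e := w)).
- apply: inter1_of => //; first by rewrite !inE eqxx orbT.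
  move=> z ze; rewrite !inE => /orP[/orP[/eqP zw|/eqP zp]|/eqP zq] //.
  + by subst; move/subsetP: eU => /(_ _ ze); move: wW; rewrite inE => /negbTE ->.
  + by subst; rewrite ze in qe.
- apply: inter1_of => //; first by rewrite !inE eqxx.
  move=> z; rewrite !inE => /orP[/orP[/eqP zw|/eqP zp]|/eqP zq] zf //.
  + by subst; move: (fW' _ zf); rewrite pU.
  + by subst; move: (fW' _ zf); rewrite qU.
- apply: disj_of=> z ze zf; move: (fW' _ zf).
  by move/subsetP: eU => /(_ _ ze) ->.
Qed.

Lemma set3C (T : finType) (a b c : T) : [set a; b; c] = [set a; c; b].
Proof. by apply/setP=> z; rewrite !inE; case: (z == a); case: (z == b); case: (z == c). Qed.

Lemma set3A (T : finType) (a b c : T) : [set a; b; c] = [set b; a; c].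
Proof. by apply/setP=> z; rewrite !inE; case: (z == a); case: (z == b); case: (z == c). Qed.

Lemma Bside (T : finType) (H : {set {set T}}) e1 e2 x w p q f :
  uniform3 H -> ~ has_P H -> e1 \in H -> e2 \in H -> e1 :&: e2 = [set x] ->
  [set w; p; q] \in H -> w \in ~: (e1 :|: e2) -> p != q ->
  p \in e1 -> p \notin e2 -> q \in e1 :|: e2 ->
  f \in H -> f \subset ~: (e1 :|: e2) -> w \in f ->
  [set w; p; q] = (e1 :\ x) :|: [set w].
Proof.
move=> U3 nP E1 E2 Ex Hh wW pq p1 p2 qU F fW wf.
have [x1 x2] := xin Ex.
have pU : p \in e1 :|: e2 by rewrite inE p1.
have q1 : q \in e1.
  apply/negPn/negP=> q1; exact: (qsame U3 nP E1 (subsetUl _ _) p1 q1 Hh wW pU qU F fW wf).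
have q2 : q \notin e2.
  apply/negP=> q2; apply: (qsame U3 nP E2 (subsetUr _ _) q2 p2 _ wW qU pU F fW wf).
  by rewrite set3C.
have px : p != x by apply/negP=> /eqP px; subst; rewrite x2 in p2.
have qx : q != x by apply/negP=> /eqP qx; subst; rewrite x2 in q2.
have Ee : e1 :\ x = [set p; q].
  apply/eqP; rewrite eq_sym eqEcard; apply/andP; split.
    by apply/subsetP=> z; rewrite !inE => /orP[]/eqP->; rewrite ?px ?qx.
  by rewrite cards2 pq; move: (U3 _ E1); rewrite (cardsD1 x) x1 add1n => -[->].
by rewrite Ee; apply/setP=> z; rewrite !inE; case: (z == w); case: (z == p); case: (z == q).
Qed.

Lemma classify (T : finType) (H : {set {set T}}) e1 e2 x h w f :
  uniform3 H -> ~ has_P H -> e1 \in H -> e2 \in H -> e1 :&: e2 = [set x] ->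
  h \in H -> w \in h -> w \in ~: (e1 :|: e2) ->
  f \in H -> f \subset ~: (e1 :|: e2) -> w \in f ->
  (exists2 u, u \in h & u \in e1 :|: e2) ->
  [\/ h = (e1 :\ x) :|: [set w], h = (e2 :\ x) :|: [set w] |
      exists y, [/\ y \in ~: (e1 :|: e2), y != w & h = [set x; w; y]]].
Proof.
move=> U3 nP E1 E2 Ex Hh wh wW F fW wf [u uh uU].
have [x1 x2] := xin Ex.
have Ex' : e2 :&: e1 = [set x] by rewrite setIC.
have [p [q [/and3P[wp wq pq] Eh]]] := card3_first (U3 _ Hh) wh.
rewrite Eh in Hh *.
have notU z : z \in ~: (e1 :|: e2) = (z \notin e1 :|: e2) by rewrite inE.
case pU: (p \in e1 :|: e2); case qU: (q \in e1 :|: e2).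
- move: (pU); rewrite inE => /orP[p1|p2].
  + case p2: (p \in e2).
    * have px := inter1 Ex p1 p2; subst p.
      have q1 : q \in e1.
        apply/negPn/negP=> q1; exact: (qsame U3 nP E1 (subsetUl _ _) x1 q1 Hh wW pU qU F fW wf).
      have q2 : q \in e2.
        apply/negPn/negP=> q2; exact: (qsame U3 nP E2 (subsetUr _ _) x2 q2 Hh wW pU qU F fW wf).
      by move: (inter1 Ex q1 q2) => qx; rewrite qx eqxx in pq.
    * by constructor 1; apply: (Bside U3 nP E1 E2 Ex Hh wW pq p1 (negbT p2) qU F fW wf).
  + case p1: (p \in e1).
    * have px := inter1 Ex p1 p2; subst p.
      have q1 : q \in e1.
        apply/negPn/negP=> q1; exact: (qsame U3 nP E1 (subsetUl _ _) x1 q1 Hh wW pU qU F fW wf).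
      have q2 : q \in e2.
        apply/negPn/negP=> q2; exact: (qsame U3 nP E2 (subsetUr _ _) x2 q2 Hh wW pU qU F fW wf).
      by move: (inter1 Ex q1 q2) => qx; rewrite qx eqxx in pq.
    * constructor 2; apply: (Bside U3 nP E2 E1 Ex' Hh _ pq p2 (negbT p1) _ F _ wf).
      - by rewrite setUC.
      - by rewrite setUC.
      - by rewrite setUC.
- have qW : q \in ~: (e1 :|: e2) by rewrite notU qU.
  have px : p = x.
    move: (pU); rewrite inE => /orP[p1|p2].
      exact: (p_is_x U3 nP E1 E2 Ex Hh wW qW p1).
    by apply: (p_is_x U3 nP E2 E1 Ex' Hh _ _ p2); rewrite setUC.
  subst p; constructor 3; exists q; split=> //; first by rewrite eq_sym.
  by rewrite set3A.
- have pW : p \in ~: (e1 :|: e2) by rewrite notU pU.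
  have Hh' : [set w; q; p] \in H by rewrite set3C.
  have qx : q = x.
    move: (qU); rewrite inE => /orP[q1|q2].
      exact: (p_is_x U3 nP E1 E2 Ex Hh' wW pW q1).
    by apply: (p_is_x U3 nP E2 E1 Ex' Hh' _ _ q2); rewrite setUC.
  subst q; constructor 3; exists p; split=> //; first by rewrite eq_sym.
  by apply/setP=> z; rewrite !inE; case: (z == w); case: (z == p); case: (z == x).
- move: uh; rewrite Eh !inE => /orP[/orP[]|]/eqP zz; subst u.
  + by rewrite inE uU in wW.
  + by rewrite uU in pU.
  + by rewrite uU in qU.
Qed.

Lemma sum_mem (T : finType) (A S : {set T}) : \sum_(i in A) (i \in S) = #|A :&: S|.
Proof.
transitivity (\sum_(i in A | i \in S) 1).
  by rewrite big_mkcondr; apply: eq_bigr => i _; case: (i \in S).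
by rewrite -sum1_card; apply: eq_bigl => i; rewrite inE.
Qed.

Lemma card_I1 (T : finType) (A : {set T}) b : #|A :&: [set b]| = (b \in A).
Proof.
case: (boolP (b \in A)) => h.
  by rewrite (setIidPr _) ?cards1 // sub1set h.
rewrite (_ : A :&: [set b] = set0) ?cards0 //; apply/setP=> z; rewrite !inE.
by apply/andP=> [[zA /eqP zb]]; subst; rewrite zA in h.
Qed.

Lemma card_sub2 (T : finType) (A : {set T}) b c :
  A \subset [set b; c] -> #|A| <= (b \in A) + (c \in A).
Proof.
move=> sA.
have E : A = (A :&: [set b]) :|: (A :&: [set c]).
  apply/setP=> z; rewrite !inE; case zA: (z \in A) => //=.
  by move/subsetP: sA => /(_ _ zA); rewrite !inE.
by rewrite {1}E cardsU !card_I1 leq_subr.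
Qed.

Lemma boolb (p1 p2 q1 q2 r1 r2 yab yac ybc : bool) :
 ~~ (p1 && q2) -> ~~ (p1 && r2) -> ~~ (q1 && p2) -> ~~ (q1 && r2) -> ~~ (r1 && p2) -> ~~ (r1 && q2) ->
 (yab ==> ~~ [|| p1, p2, q1 | q2]) -> (yac ==> ~~ [|| p1, p2, r1 | r2]) ->
 (ybc ==> ~~ [|| q1, q2, r1 | r2]) ->
 (2*p1 + 2*p2 + (yab + yac)) + (2*q1 + 2*q2 + (yab + ybc)) + (2*r1 + 2*r2 + (yac + ybc)) <= 6.
Proof.
by case: p1; case: p2; case: q1; case: q2; case: r1; case: r2; case: yab; case: yac; case: ybc.
Qed.

Lemma W1P (T : finType) (H : {set {set T}}) (W : {set T}) w :
  reflect (w \in W /\ exists2 f, f \in induced H W & w \in f)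
          (w \in W :\: [set w in W | deg (induced H W) w == 0]).
Proof.
rewrite !inE /deg; apply: (iffP idP).
  case/andP=> nz wW; split=> //; move: nz; rewrite wW /= -lt0n card_gt0.
  by case/set0Pn=> f; rewrite inE => /andP[fI wf]; exists f.
case=> wW [f fI wf]; rewrite wW /= andbT -lt0n card_gt0; apply/set0Pn.
by exists f; rewrite inE fI wf.
Qed.

Definition ctx (T : finType) (H : {set {set T}}) e1 e2 x :=
  [/\ uniform3 H, ~ has_P H, e1 \in H, e2 \in H & e1 :&: e2 = [set x]].

Lemma ctx_sym (T : finType) (H : {set {set T}}) e1 e2 x : ctx H e1 e2 x -> ctx H e2 e1 x.
Proof. by case=> *; split=> //; rewrite setIC. Qed.

Definition W1of (T : finType) (H : {set {set T}}) (e1 e2 : {set T}) :=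
  ~: (e1 :|: e2) :\: [set w in ~: (e1 :|: e2) | deg (induced H (~: (e1 :|: e2))) w == 0].

Lemma W1of_sym (T : finType) (H : {set {set T}}) e1 e2 : W1of H e2 e1 = W1of H e1 e2.
Proof. by rewrite /W1of setUC. Qed.

Definition Yset (T : finType) (H : {set {set T}}) e1 e2 x w :=
  [set y in W1of H e1 e2 | [set x; w; y] \in H].

Definition Bof (T : finType) (e : {set T}) x w := (e :\ x) :|: [set w].

Definition Sval (T : finType) (H : {set {set T}}) e1 e2 x w :=
  2 * (Bof e1 x w \in H) + 2 * (Bof e2 x w \in H) + #|Yset H e1 e2 x w|.

Lemma inY (T : finType) (H : {set {set T}}) e1 e2 x w y :
  (y \in Yset H e1 e2 x w) = (y \in W1of H e1 e2) && ([set x; w; y] \in H).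
Proof. by rewrite inE. Qed.

Lemma W1_W (T : finType) (H : {set {set T}}) e1 e2 w :
  w \in W1of H e1 e2 -> w \in ~: (e1 :|: e2).
Proof. by case/W1P. Qed.

Lemma W1_edge (T : finType) (H : {set {set T}}) e1 e2 w :
  w \in W1of H e1 e2 -> exists f, [/\ f \in H, f \subset ~: (e1 :|: e2) & w \in f].
Proof. by case/W1P=> _ [f]; rewrite inE => /andP[fH fW] wf; exists f. Qed.

Lemma set3_neq (T : finType) (H : {set {set T}}) x w y :
  uniform3 H -> [set x; w; y] \in H -> y != w.
Proof.
move=> U3 Hh; apply/negP=> /eqP yw; subst; move: (U3 _ Hh).
rewrite (_ : [set x; w; w] = [set x; w]); last first.
  by apply/setP=> z; rewrite !inE; case: (z == x); case: (z == w).
by rewrite cards2; case: (x != w).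
Qed.

Lemma Y_sub (T : finType) (H : {set {set T}}) e1 e2 x w f :
  ctx H e1 e2 x -> f \in H -> f \subset ~: (e1 :|: e2) -> w \in f -> w \in ~: (e1 :|: e2) ->
  Yset H e1 e2 x w \subset f :\ w.
Proof.
case=> U3 nP E1 E2 Ex fH fW wf wW; apply/subsetP=> y; rewrite inY => /andP[yW1 Hh].
rewrite in_setD1 (set3_neq U3 Hh) /=.
exact: (twin U3 nP E1 E2 Ex Hh wW (W1_W yW1) fH fW wf).
Qed.

Lemma Y_card2 (T : finType) (H : {set {set T}}) e1 e2 x w :
  ctx H e1 e2 x -> w \in W1of H e1 e2 -> #|Yset H e1 e2 x w| <= 2.
Proof.
move=> C wW1; have [f [fH fW wf]] := W1_edge wW1.
apply: leq_trans (subset_leq_card (Y_sub C fH fW wf (W1_W wW1))) _.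
by case: C => U3 *; move: (U3 _ fH); rewrite (cardsD1 w) wf add1n => -[->].
Qed.

Lemma Y_excl (T : finType) (H : {set {set T}}) e1 e2 x w :
  ctx H e1 e2 x -> w \in W1of H e1 e2 -> Yset H e1 e2 x w != set0 ->
  (Bof e1 x w \notin H) && (Bof e2 x w \notin H).
Proof.
move=> C wW1 /set0Pn[y]; rewrite inY => /andP[yW1 Hh].
have C' := ctx_sym C.
case: C => U3 nP E1 E2 Ex; case: C' => _ _ _ _ Ex'.
apply/andP; split; apply/negP=> HB.
  exact: (Bexcl U3 nP E1 E2 Ex Hh (W1_W wW1) (W1_W yW1) HB).
apply: (Bexcl U3 nP E2 E1 Ex' Hh _ _ HB); rewrite setUC; [exact: W1_W wW1 | exact: W1_W yW1].
Qed.

Lemma Y_sym (T : finType) (H : {set {set T}}) e1 e2 x w y :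
  w \in W1of H e1 e2 -> y \in W1of H e1 e2 ->
  (y \in Yset H e1 e2 x w) = (w \in Yset H e1 e2 x y).
Proof. by move=> wW yW; rewrite !inY wW yW set3C. Qed.

Lemma S_le4 (T : finType) (H : {set {set T}}) e1 e2 x w :
  ctx H e1 e2 x -> w \in W1of H e1 e2 -> Sval H e1 e2 x w <= 4.
Proof.
move=> C wW1; rewrite /Sval.
case: (eqVneq (Yset H e1 e2 x w) set0) => [->|ne].
  by rewrite cards0; case: (_ \in H); case: (_ \in H).
move/andP: (Y_excl C wW1 ne) => [/negbTE -> /negbTE ->].
by have := Y_card2 C wW1; rewrite !muln0 !add0n => /leq_trans; apply.
Qed.

Lemma in_W1_of_edge (T : finType) (H : {set {set T}}) e1 e2 f w :
  f \in H -> f \subset ~: (e1 :|: e2) -> w \in f -> w \in W1of H e1 e2.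
Proof.
move=> fH fW wf; apply/W1P; split; first by move/subsetP: fW; apply.
by exists f => //; rewrite inE fH fW.
Qed.

Lemma S_f (T : finType) (H : {set {set T}}) e1 e2 x a b c :
  ctx H e1 e2 x -> [set a; b; c] \in H -> [set a; b; c] \subset ~: (e1 :|: e2) ->
  [&& a != b, a != c & b != c] ->
  Sval H e1 e2 x a + Sval H e1 e2 x b + Sval H e1 e2 x c <= 6.
Proof.
move=> C fH fW /and3P[ab ac bc].
have aW1 : a \in W1of H e1 e2 by apply: (in_W1_of_edge fH fW); rewrite !inE eqxx.
have bW1 : b \in W1of H e1 e2 by apply: (in_W1_of_edge fH fW); rewrite !inE eqxx orbT.
have cW1 : c \in W1of H e1 e2 by apply: (in_W1_of_edge fH fW); rewrite !inE eqxx orbT.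
have af : a \in [set a; b; c] by rewrite !inE eqxx.
have bf : b \in [set a; b; c] by rewrite !inE eqxx orbT.
have cf : c \in [set a; b; c] by rewrite !inE eqxx orbT.
have Ya : #|Yset H e1 e2 x a| <= (b \in Yset H e1 e2 x a) + (c \in Yset H e1 e2 x a).
  apply: card_sub2; apply: subset_trans (Y_sub C fH fW af (W1_W aW1)) _.
  by apply/subsetP=> z; rewrite !inE => /andP[za]; rewrite (negbTE za).
have Yb : #|Yset H e1 e2 x b| <= (a \in Yset H e1 e2 x b) + (c \in Yset H e1 e2 x b).
  apply: card_sub2; apply: subset_trans (Y_sub C fH fW bf (W1_W bW1)) _.
  by apply/subsetP=> z; rewrite !inE => /andP[zb]; rewrite (negbTE zb) orbF.
have Yc : #|Yset H e1 e2 x c| <= (a \in Yset H e1 e2 x c) + (b \in Yset H e1 e2 x c).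
  apply: card_sub2; apply: subset_trans (Y_sub C fH fW cf (W1_W cW1)) _.
  by apply/subsetP=> z; rewrite !inE => /andP[zc]; rewrite (negbTE zc) orbF.
rewrite [a \in Yset _ _ _ _ b](Y_sym _ bW1 aW1) [a \in Yset _ _ _ _ c](Y_sym _ cW1 aW1)
  [b \in Yset _ _ _ _ c](Y_sym _ cW1 bW1) in Yb Yc.
have F v v' : v \in [set a; b; c] -> v' \in [set a; b; c] -> v != v' ->
   ~~ ((Bof e1 x v \in H) && (Bof e2 x v' \in H)).
  move=> vf v'f vv'; apply/negP=> /andP[B1 B2]; case: C => U3 nP E1 E2 Ex.
  exact: (F1 U3 nP E1 E2 Ex fH fW vf v'f vv' B1 B2).
have Ex v v' : v \in W1of H e1 e2 -> v' \in W1of H e1 e2 -> v' \in Yset H e1 e2 x v ->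
   ~~ [|| Bof e1 x v \in H, Bof e2 x v \in H, Bof e1 x v' \in H | Bof e2 x v' \in H].
  move=> vW v'W yv.
  have /andP[n1 n2] : (Bof e1 x v \notin H) && (Bof e2 x v \notin H).
    by apply: (Y_excl C vW); apply/set0Pn; exists v'.
  have /andP[n3 n4] : (Bof e1 x v' \notin H) && (Bof e2 x v' \notin H).
    by apply: (Y_excl C v'W); apply/set0Pn; exists v; rewrite -(Y_sym _ vW v'W).
  by rewrite (negbTE n1) (negbTE n2) (negbTE n3) (negbTE n4).
have := boolb (F _ _ af bf ab) (F _ _ af cf ac) (F _ _ bf af _) (F _ _ bf cf bc)
  (F _ _ cf af _) (F _ _ cf bf _)
  (introT implyP (Ex _ _ aW1 bW1)) (introT implyP (Ex _ _ aW1 cW1)) (introT implyP (Ex _ _ bW1 cW1)).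
rewrite !(eq_sym b a) !(eq_sym c a) !(eq_sym c b) ab ac bc => /(_ isT isT isT).
rewrite /Sval; apply: leq_trans.
by rewrite !leq_add ?leqnn.
Qed.

Definition H1of (T : finType) (H : {set {set T}}) (e1 e2 : {set T}) :=
  [set h in H | [&& h :&: (e1 :|: e2) != set0, h :&: ~: (e1 :|: e2) != set0 &
                    h :&: ~: (e1 :|: e2) \subset W1of H e1 e2]].

Lemma inH1 (T : finType) (H : {set {set T}}) e1 e2 h :
  (h \in H1of H e1 e2) = (h \in H) && [&& h :&: (e1 :|: e2) != set0, h :&: ~: (e1 :|: e2) != set0 &
                    h :&: ~: (e1 :|: e2) \subset W1of H e1 e2].
Proof. by rewrite inE. Qed.

Definition wt (T : finType) (e1 e2 h : {set T}) := 3 - #|h :&: ~: (e1 :|: e2)|.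

Definition c2 (T : finType) (H : {set {set T}}) e1 e2 w :=
  \sum_(h in H1of H e1 e2) (w \in h) * wt e1 e2 h.

Lemma sum_eq1 (T : finType) (A : {set T}) b : \sum_(i in A) (i == b) = (b \in A).
Proof.
rewrite -card_I1 -sum_mem; apply: eq_bigr => i _; by rewrite inE.
Qed.

Lemma c2_le (T : finType) (H : {set {set T}}) e1 e2 x w :
  ctx H e1 e2 x -> w \in W1of H e1 e2 -> c2 H e1 e2 w <= Sval H e1 e2 x w.
Proof.
move=> C wW1.
have [f [fH fW wf]] := W1_edge wW1.
set Y := Yset H e1 e2 x w.
set imY := [set [set x; w; y] | y in Y].
set B1 := Bof e1 x w; set B2 := Bof e2 x w.
apply: (@leq_trans (\sum_(h in H1of H e1 e2) (2 * (h == B1) + 2 * (h == B2) + (h \in imY)))).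
  apply: leq_sum => h; rewrite inH1 => /andP[hH /and3P[hU hW hW1]].
  case wh: (w \in h); last by rewrite mul0n.
  rewrite mul1n /wt.
  have [u uh uU] : exists2 u, u \in h & u \in e1 :|: e2.
    by case/set0Pn: hU => u; rewrite inE => /andP[]; exists u.
  have wt2 : 3 - #|h :&: ~: (e1 :|: e2)| <= 2.
    by rewrite leq_subLR addn2 !ltnS card_gt0.
  case: C => U3 nP E1 E2 Ex.
  case: (classify U3 nP E1 E2 Ex hH wh (W1_W wW1) fH fW wf (ex_intro2 _ _ u uh uU)).
  - move=> Eh; rewrite (_ : (h == B1) = true); last by rewrite Eh eqxx.
    by apply: leq_trans wt2 _; rewrite muln1 -addnA leq_addr.
  - move=> Eh; rewrite (_ : (h == B2) = true); last by rewrite Eh eqxx.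
    by apply: leq_trans wt2 _; rewrite muln1 addnC addnA leq_addl.
  - case=> y [yW yw Eh].
    have yh : y \in h by rewrite Eh !inE eqxx orbT.
    have yW1 : y \in W1of H e1 e2.
      by move/subsetP: hW1; apply; rewrite inE yh yW.
    have -> : h \in imY by apply/imsetP; exists y => //; rewrite inY yW1 -Eh hH.
    apply: leq_trans (leq_addl _ _).
    rewrite leq_subLR; apply: (@leq_trans (1 + #|[set w; y]|)).
      by rewrite cards2 eq_sym yw.
    rewrite addnC leq_add2r; apply: subset_leq_card; apply/subsetP=> z.
    rewrite !inE => /orP[]/eqP ->; rewrite ?wh ?yh /=.
      by move: (W1_W wW1); rewrite !inE.
    by move: yW; rewrite !inE.
rewrite big_split big_split /= -!big_distrr /= !sum_eq1 sum_mem /Sval.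
rewrite !leq_add //;
  try by (case: (boolP (_ \in H1of _ _ _)) => //; rewrite inH1 => /andP[->]).
by apply: leq_trans (subset_leq_card (subsetIr _ _)) (leq_imset_card _ _).
Qed.

Lemma wt_ok (T : finType) (H : {set {set T}}) e1 e2 h :
  uniform3 H -> h \in H1of H e1 e2 ->
  #|W1of H e1 e2 :&: h| * wt e1 e2 h = 2.
Proof.
move=> U3; rewrite inH1 => /andP[hH /and3P[hU hW hW1]].
have -> : W1of H e1 e2 :&: h = h :&: ~: (e1 :|: e2).
  apply/setP=> z; apply/idP/idP.
    by rewrite inE => /andP[zW1 zh]; rewrite inE zh (W1_W zW1).
  by move=> zh; rewrite inE (subsetP hW1 _ zh); move: zh; rewrite inE => /andP[-> _].
have k1 : 0 < #|h :&: ~: (e1 :|: e2)| by rewrite card_gt0.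
have k0 : 0 < #|h :&: (e1 :|: e2)| by rewrite card_gt0.
have := cardsID (e1 :|: e2) h; rewrite setDE (U3 _ hH) /wt.
move: k1 k0; case: #|h :&: ~: (e1 :|: e2)| => [|[|[|k]]] //; case: #|h :&: (e1 :|: e2)| => [|[|[|j]]] // => _ _; lia.
Qed.

Lemma dcount (T : finType) (H : {set {set T}}) e1 e2 :
  uniform3 H -> 2 * #|H1of H e1 e2| = \sum_(w in W1of H e1 e2) c2 H e1 e2 w.
Proof.
move=> U3; rewrite /c2 exchange_big /=.
rewrite mulnC -sum_nat_const; apply: eq_bigr => h hH1.
by rewrite -big_distrl /= sum_mem wt_ok.
Qed.

Lemma part1 (T : finType) (H : {set {set T}}) e1 e2 x :
  ctx H e1 e2 x -> induced H (~: (e1 :|: e2)) != set0 ->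
  #|H1of H e1 e2| + 3 <= 2 * #|W1of H e1 e2|.
Proof.
move=> C /set0Pn[f]; rewrite inE => /andP[fH fW].
have U3 : uniform3 H by case: C.
have [c cf] : exists c, c \in f.
  by apply/set0Pn; rewrite -card_gt0 (U3 _ fH).
have [a [b [/and3P[ca cb ab] Ef]]] := card3_first (U3 _ fH) cf.
have fW1 : f \subset W1of H e1 e2.
  by apply/subsetP=> z zf; exact: (in_W1_of_edge fH fW zf).
have Sle : \sum_(w in W1of H e1 e2) c2 H e1 e2 w <= 6 + #|W1of H e1 e2 :\: f| * 4.
  apply: (@leq_trans (\sum_(w in W1of H e1 e2) Sval H e1 e2 x w)).
    by apply: leq_sum => w wW1; exact: c2_le.
  rewrite (big_setID f) /= (setIidPr fW1) leq_add //.
    rewrite Ef (_ : [set c; a; b] = c |: (a |: [set b])); last first.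
      by apply/setP=> z; rewrite !inE orbA.
    rewrite big_setU1 /=; last by rewrite !inE negb_or ca cb.
    rewrite big_setU1 /=; last by rewrite !inE ab.
    rewrite big_set1 addnA.
    by apply: S_f C _ _ _; rewrite -?Ef // ca cb ab.
  rewrite -sum_nat_const; apply: leq_sum => w; rewrite inE => /andP[_ wW1].
  exact: S_le4 C wW1.
have cardW1 := cardsID f (W1of H e1 e2).
rewrite (setIidPr fW1) (U3 _ fH) in cardW1.
rewrite -(dcount e1 e2 U3) in Sle.
lia.
Qed.

Lemma cardU5 (T : finType) (H : {set {set T}}) e1 e2 x :
  ctx H e1 e2 x -> #|e1 :|: e2| = 5.
Proof.
by case=> U3 _ E1 E2 Ex; rewrite cardsU (U3 _ E1) (U3 _ E2) Ex cards1.
Qed.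

Lemma HU_all (T : finType) (H : {set {set T}}) e1 e2 x :
  ctx H e1 e2 x -> #|induced H (e1 :|: e2)| <= 10.
Proof.
move=> C; have U3 : uniform3 H by case: C.
apply: (@leq_trans #|[set A : {set T} | A \subset e1 :|: e2 & #|A| == 3]|).
  apply: subset_leq_card; apply/subsetP=> g; rewrite !inE => /andP[gH gU].
  by rewrite gU (U3 _ gH) eqxx.
by rewrite cards_draws (cardU5 C).
Qed.

Lemma noxA (T : finType) (H : {set {set T}}) e1 e2 x e g w y :
  ctx H e1 e2 x -> e \in H -> x \in e -> e \subset e1 :|: e2 ->
  g \in H -> g \subset e1 :|: e2 -> x \notin g -> #|g :&: e| = 1 ->
  [set x; w; y] \in H -> w \in ~: (e1 :|: e2) -> y \in ~: (e1 :|: e2) -> False.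
Proof.
case=> U3 nP E1 E2 Ex eH xe eU gH gU xg ge1 Ah wW yW.
move/eqP/cards1P: ge1 => [c Ec].
have eA : e :&: [set x; w; y] = [set x].
  apply: inter1_of => //; first by rewrite !inE eqxx.
  move=> z ze; rewrite !inE => /orP[/orP[/eqP //|/eqP zw]|/eqP zy]; subst.
  + by move: wW; rewrite inE (subsetP eU _ ze).
  + by move: yW; rewrite inE (subsetP eU _ ze).
apply: (P_lem U3 nP gH eH Ah Ec eA).
apply: disj_of=> z zg; rewrite !inE => /orP[/orP[/eqP zx|/eqP zw]|/eqP zy]; subst.
+ by rewrite zg in xg.
+ by move: wW; rewrite inE (subsetP gU _ zg).
+ by move: yW; rewrite inE (subsetP gU _ zg).
Qed.

Lemma card_e1x (T : finType) (H : {set {set T}}) e1 e2 x :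
  ctx H e1 e2 x -> #|e1 :\ x| = 2.
Proof.
case=> U3 _ E1 _ Ex; have [x1 _] := xin Ex.
by move: (U3 _ E1); rewrite (cardsD1 x) x1 add1n => -[].
Qed.

Lemma HU_A (T : finType) (H : {set {set T}}) e1 e2 x w y :
  ctx H e1 e2 x -> [set x; w; y] \in H -> w \in ~: (e1 :|: e2) -> y \in ~: (e1 :|: e2) ->
  #|induced H (e1 :|: e2)| <= 6.
Proof.
move=> C Ah wW yW.
have C' := ctx_sym C.
case: (C) => U3 nP E1 E2 Ex; have [x1 x2] := xin Ex.
have xg g : g \in H -> g \subset e1 :|: e2 -> x \in g.
  move=> gH gU; apply/negPn/negP=> xg.
  have Eg : g = (g :&: e1) :|: (g :&: e2).
    by apply/setP=> z; rewrite !inE -andb_orr; case zg: (z \in g) => //=; rewrite -in_setU (subsetP gU).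
  have I0 : (g :&: e1) :&: (g :&: e2) = set0.
    apply/setP=> z; rewrite !inE; apply/negP=> /andP[/andP[zg z1] /andP[_ z2]].
    by move: (inter1 Ex z1 z2) => zx; subst; rewrite zg in xg.
  have le1 : #|g :&: e1| <= 2.
    rewrite -(card_e1x C); apply: subset_leq_card; apply/subsetP=> z; rewrite !inE => /andP[zg ->].
    by rewrite andbT; apply/negP=> /eqP zx; subst; rewrite zg in xg.
  have le2 : #|g :&: e2| <= 2.
    rewrite -(card_e1x C'); apply: subset_leq_card; apply/subsetP=> z; rewrite !inE => /andP[zg ->].
    by rewrite andbT; apply/negP=> /eqP zx; subst; rewrite zg in xg.
  have := U3 _ gH; rewrite {1}Eg cardsU I0 cards0 subn0 => s3.
  have [h1|h2] : #|g :&: e1| = 1 \/ #|g :&: e2| = 1 by lia.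
    exact: (noxA C E1 x1 (subsetUl _ _) gH gU xg h1 Ah wW yW).
  exact: (noxA C E2 x2 (subsetUr _ _) gH gU xg h2 Ah wW yW).
apply: (@leq_trans #|[set x |: s | s in [set s : {set T} | s \subset (e1 :|: e2) :\ x & #|s| == 2]]|).
  apply: subset_leq_card; apply/subsetP=> g; rewrite inE => /andP[gH gU].
  have xg' := xg g gH gU.
  apply/imsetP; exists (g :\ x); last by rewrite setD1K.
  rewrite inE; apply/andP; split.
    by apply/subsetP=> z; rewrite !inE => /andP[-> zg]; rewrite andTb -in_setU (subsetP gU).
  by move: (U3 _ gH); rewrite (cardsD1 x) xg' add1n => -[->].
apply: leq_trans (leq_imset_card _ _) _.
rewrite cards_draws.
have : #|(e1 :|: e2) :\ x| = 4.
  by move: (cardU5 C); rewrite (cardsD1 x) in_setU x1 add1n => -[].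
by move=> ->.
Qed.

Lemma HU_B (T : finType) (H : {set {set T}}) e1 e2 x w f :
  ctx H e1 e2 x -> Bof e1 x w \in H -> f \in H -> f \subset ~: (e1 :|: e2) -> w \in f ->
  #|induced H (e1 :|: e2)| <= 4.
Proof.
move=> C BH fH fW wf.
case: (C) => U3 nP E1 E2 Ex; have [x1 x2] := xin Ex.
have wW : w \in ~: (e1 :|: e2) by apply: (subsetP fW).
have ce2 := card_e1x C.
have key g : g \in H -> g \subset e1 :|: e2 ->
    g = e2 \/ exists2 z, z \in e2 & g = (e1 :\ x) :|: [set z].
  move=> gH gU.
  have wg : w \notin g by apply/negP=> wg; move: wW; rewrite inE (subsetP gU _ wg).
  have n1 : #|g :&: (e1 :\ x)| != 1.
    apply/negP=> /cards1P[c Ec].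
    apply: (P_lem U3 nP gH BH fH (c := c) (e := w)).
    - rewrite -Ec; apply/setP=> z; rewrite !inE; case zg: (z \in g) => //=.
      have zw : (z == w) = false by apply/negP=> /eqP zw; subst; rewrite zg in wg.
      by rewrite zw orbF.
    - apply: inter1_of => //; first by rewrite !inE eqxx orbT.
      move=> z; rewrite !inE => /orP[/andP[_ z1]|/eqP //] zf.
      by move: (subsetP fW _ zf); rewrite !inE z1.
    - apply: disj_of=> z zg zf.
      by move: (subsetP fW _ zf); rewrite inE (subsetP gU _ zg).
  have le2 : #|g :&: (e1 :\ x)| <= 2 by rewrite -ce2; apply: subset_leq_card; apply: subsetIr.
  case: (posnP #|g :&: (e1 :\ x)|) => [c0|cpos].
    left; apply/eqP; rewrite eqEcard (U3 _ gH) (U3 _ E2) leqnn andbT.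
    apply/subsetP=> z zg; move: (subsetP gU _ zg); rewrite inE => /orP[z1|//].
    case: (eqVneq z x) => [->//|zx].
    move/eqP: c0; rewrite cards_eq0 => /eqP/setP/(_ z); rewrite !inE zg zx z1.
    done.
  have c2' : #|g :&: (e1 :\ x)| = 2 by move: n1 cpos le2; case: #|_| => [|[|[|]]].
  have sub : e1 :\ x \subset g.
    have /eqP : g :&: (e1 :\ x) = e1 :\ x.
      by apply/eqP; rewrite eqEcard subsetIr c2' ce2 leqnn.
    by move=> /eqP E; rewrite -E subsetIl.
  have : #|g :\: (e1 :\ x)| == 1.
    by move: (cardsID (e1 :\ x) g); rewrite c2' (U3 _ gH) => -[<-].
  case/cards1P=> z Ez.
  right; exists z.
    have zg : z \in g :\: (e1 :\ x) by rewrite Ez inE.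
    move: zg; rewrite !inE => /andP[zn zg]; move: (subsetP gU _ zg); rewrite inE => /orP[z1|//].
    by move: zn; rewrite z1 andbT negbK => /eqP ->.
  apply/setP=> v; rewrite inE -Ez !inE.
  case v1: ((v != x) && (v \in e1)) => //=; by apply: (subsetP sub); rewrite !inE v1.
apply: (@leq_trans #|e2 |: [set (e1 :\ x) :|: [set z] | z in e2]|).
  apply: subset_leq_card; apply/subsetP=> g; rewrite inE => /andP[gH gU].
  case: (key g gH gU) => [->|[z ze2 ->]]; rewrite !inE ?eqxx //.
  by apply/orP; right; apply/imsetP; exists z.
rewrite cardsU1 -(U3 _ E2) -add1n; apply: leq_add; [exact: leq_b1 | exact: leq_imset_card].
Qed.

Unset Implicit Arguments.
Theorem mainTheorem10 (T : finType) (H : {set {set T}}) (e1 e2 : {set T}) (x : T) :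
  uniform3 H -> PC_free H ->
  e1 \in H -> e2 \in H -> e1 :&: e2 = [set x] ->
  let U := e1 :|: e2 in
  let W := ~: U in
  induced H W != set0 ->
  let W0 := [set w in W | deg (induced H W) w == 0] in
  let W1 := W :\: W0 in
  let H1 := [set h in H | [&& h :&: U != set0, h :&: W != set0 & h :&: W \subset W1]] in
  #|H1| + 3 <= 2 * #|W1| /\
  (4 <= #|W1| -> #|induced H U| + #|H1| <= 2 * #|W1| + 2).
Proof.
move=> U3 [nP _] E1 E2 Ex U W HW W0 W1 H1.
have C : ctx H e1 e2 x by [].
have eW1 : W1 = W1of H e1 e2 by [].
have eH1 : H1 = H1of H e1 e2 by [].
have eU : U = e1 :|: e2 by [].
rewrite eW1 eH1 eU.
have P1 := part1 C HW.
split=> // W4.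
case: (boolP [exists w in W1of H e1 e2, (Bof e1 x w \in H) || (Bof e2 x w \in H)]).
  case/existsP=> w /andP[wW1 /orP[B1|B2]]; have [f [fH fW wf]] := W1_edge wW1.
    have := HU_B C B1 fH fW wf; move: P1 W4; clear; lia.
  have fW' : f \subset ~: (e2 :|: e1) by rewrite setUC.
  have := HU_B (ctx_sym C) B2 fH fW' wf; rewrite setUC; move: P1 W4; clear; lia.
rewrite negb_exists => /forallP noB.
have noB' w : w \in W1of H e1 e2 -> (Bof e1 x w \notin H) && (Bof e2 x w \notin H).
  by move=> wW1; move: (noB w); rewrite wW1 /= negb_or.
have Hle : 2 * #|H1of H e1 e2| <= 2 * #|W1of H e1 e2|.
  rewrite (dcount e1 e2 U3) mulnC -sum_nat_const; apply: leq_sum => w wW1.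
  apply: leq_trans (c2_le C wW1) _; rewrite /Sval.
  move/andP: (noB' w wW1) => [/negbTE -> /negbTE ->].
  exact: Y_card2 C wW1.
case: (eqVneq (H1of H e1 e2) set0) => [E0|].
  by rewrite E0 cards0; have := HU_all C; move: W4; clear; lia.
case/set0Pn=> h; rewrite inH1 => /andP[hH /and3P[hU hW hW1]].
case/set0Pn: hW => w; rewrite inE => /andP[wh wW].
have wW1 : w \in W1of H e1 e2 by apply: (subsetP hW1); rewrite inE wh wW.
have [f [fH fW wf]] := W1_edge wW1.
have [u uh uU] : exists2 u, u \in h & u \in e1 :|: e2.
  by case/set0Pn: hU => u; rewrite inE => /andP[]; exists u.
case: (classify U3 nP E1 E2 Ex hH wh wW fH fW wf (ex_intro2 _ _ u uh uU)).
- by move=> Eh; move: (noB' w wW1); rewrite /Bof -Eh hH.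
- by move=> Eh; move: (noB' w wW1); rewrite /Bof -Eh hH andbF.
- case=> y [yW _ Eh]; rewrite Eh in hH.
  have := HU_A C hH wW yW; move: W4 Hle; clear; lia.
Qed.
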